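(* Let $w$ and $t$ be positive integers with $t\ge 2$, and let $u=\lfloor (\frac{t}{2}+1)^2\rfloor$. Then there exists a constant $c>0$, depending only on $w$ and $t$, such that for every sufficiently large integer $v$ there exists a $t$-IPPS$(w,v)$ of size at least $c\,v^{\frac{w}{u-1}}$; that is, $I_t(w,v)\ge c\,v^{\frac{w}{u-1}}$.
   Context: A $(w,v)$ set system is a pair $(\mathcal{X},\mathcal{B})$ with $|\mathcal{X}|=v$ and $\mathcal{B}\subseteq\binom{\mathcal{X}}{w}$, where $\binom{\mathcal{X}}{w}$ denotes the family of all $w$-element subsets of $\mathcal{X}$; elements of $\mathcal{B}$ are called blocks. For a $w$-subset $T\subseteq\mathcal{X}$ let $P_t(T)=\{\mathcal{P}\subseteq\mathcal{B}: |\mathcal{P}|\le t,\ T\subseteq\bigcup_{B\in\mathcal{P}}B\}$. A $(w,v)$ set system is a $t$-parent-identifying set system, written $t$-IPPS$(w,v)$, if for every $w$-subset $T\subseteq\mathcal{X}$, either $P_t(T)$ is empty or $\bigcap_{\mathcal{P}\in P_t(T)}\mathcal{P}\neq\emptyset$. The size of a $t$-IPPS$(w,v)$ is $|\mathcal{B}|$, and $I_t(w,v)$ denotes the maximum size of a $t$-IPPS$(w,v)$. *)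

(* Defs.v *)
From Stdlib Require Import Reals.
From mathcomp Require Import all_boot.
Set Implicit Arguments. Unset Strict Implicit. Unset Printing Implicit Defensive.

Definition set_system (w v : nat) (B : {set {set 'I_v}}) : Prop :=
  forall b, b \in B -> #|b| = w.

Definition Pt (t v : nat) (B : {set {set 'I_v}}) (T : {set 'I_v})
  : {set {set {set 'I_v}}} :=
  [set P : {set {set 'I_v}} | [&& P \subset B, #|P| <= t &
                                  T \subset \bigcup_(b in P) b]].

Definition IPPS (t w v : nat) (B : {set {set 'I_v}}) : Prop :=
  set_system w B /\
  forall T : {set 'I_v}, #|T| = w ->
    Pt t B T = set0 \/ (\bigcap_(P in Pt t B T) P) != set0.

(* Main.v *)
Require Import Defs.
From Stdlib Require Import Reals Lia.
From mathcomp Require Import all_boot all_order all_algebra zify ring.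
Set Implicit Arguments. Unset Strict Implicit. Unset Printing Implicit Defensive.

Lemma sum_card (T : finType) (A : {set T}) : \sum_x (x \in A) = #|A|.
Proof.
rewrite -sum1_card [RHS]big_mkcond /=; apply: eq_bigr => x _; by case: (x \in A).
Qed.

Lemma card_bigcup_le (I T : finType) (A : {set I}) (F : I -> {set T}) :
  #|\bigcup_(i in A) F i| <= \sum_(i in A) #|F i|.
Proof.
have -> : \sum_(i in A) #|F i| = \sum_(i in A) \sum_x (x \in F i).
  by apply: eq_bigr => i _; rewrite sum_card.
rewrite -sum_card exchange_big /=; apply: leq_sum => x _.
case: (boolP (x \in \bigcup_(i in A) F i)) => // /bigcupP [i iA xi].
by rewrite (bigD1 i) //= xi.
Qed.

Lemma overlap w v (C : {set {set 'I_v}}) (T : {set 'I_v}) :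
 (forall b, b \in C -> #|b| = w) -> #|T| = w ->
 (forall x, x \in T -> 1 < #|[set b in C | x \in b]|) ->
 #|\bigcup_(b in C) b| + w <= #|C| * w.
Proof.
move=> hC hT h2.
have -> : #|C| * w = \sum_(b in C) #|b|.
  by rewrite -sum_nat_const; apply: eq_bigr => b hb; rewrite hC.
have -> : \sum_(b in C) #|b| = \sum_(b in C) \sum_x (x \in b).
  by apply: eq_bigr => b _; rewrite sum_card.
rewrite exchange_big /= -{1}hT -!sum_card -big_split /=.
apply: leq_sum => x _.
have -> : \sum_(b in C) (x \in b) = #|[set b in C | x \in b]|.
  rewrite -sum_card big_mkcond /=; apply: eq_bigr => b _; rewrite inE.
  by case: (b \in C).
case: (boolP (x \in T)) => xT.
  have := h2 x xT; case: (x \in _) => /=; lia.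
rewrite /= addn0; case: (boolP (x \in \bigcup_(b in C) b)) => // /bigcupP [b bC xb].
by apply/card_gt0P; exists b; rewrite inE bC xb.
Qed.

Definition nobad u w v (B : {set {set 'I_v}}) :=
  forall C : {set {set 'I_v}}, C \subset B -> 2 <= #|C| <= u ->
    (#|C| - 1) * w < #|\bigcup_(b in C) b|.

Lemma ipps_of_nobad t w v (B : {set {set 'I_v}}) : 0 < w ->
  (forall b, b \in B -> #|b| = w) -> nobad ((t + 2) ^ 2 %/ 4) w B -> IPPS t w B.
Proof.
move=> hw hB hnb; split => // T hT.
case: (eqVneq (Pt t B T) set0) => [-> | hne]; [by left | right].
apply/negP => /eqP hcap.
pose Qs := [set Q : {set {set {set 'I_v}}} |
              (Q \subset Pt t B T) && (\bigcap_(P in Q) P == set0)].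
have PtQ : Pt t B T \in Qs by rewrite inE subxx hcap eqxx.
case: (@arg_minnP _ _ [pred Q | Q \in Qs]
         (fun Q : {set {set {set 'I_v}}} => #|Q|) PtQ) => Q.
rewrite /= inE => /andP [QPt /eqP Qcap] hmin.
have Q0 : Q != set0.
  apply/eqP => Q0; move: Qcap; rewrite Q0 big_set0 => /setP /(_ set0).
  by rewrite !inE.
have hmin' : forall P, P \in Q -> \bigcap_(P' in Q :\ P) P' != set0.
  move=> P PQ; apply/negP => /eqP h.
  have := hmin (Q :\ P).
  rewrite /= inE h eqxx (subset_trans (subsetDl Q [set P]) QPt) /= => /(_ isT).
  by rewrite (cardsD1 P Q) PQ /=; lia.
have hPt : forall P, P \in Q -> [&& P \subset B, #|P| <= t & T \subset \bigcup_(b in P) b].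
  by move=> P PQ; have := subsetP QPt P PQ; rewrite inE.
pose e P := odflt set0 [pick x in (\bigcap_(P' in Q :\ P) P') :\: P].
have espec : forall P, P \in Q ->
    (e P \notin P) /\ (forall P', P' \in Q -> P' != P -> e P \in P').
  move=> P PQ; rewrite /e; case: pickP => [x | hnone].
    rewrite !inE => /andP [xnP /bigcapP xi]; split => // P' P'Q neq.
    by apply: xi; rewrite !inE neq P'Q.
  exfalso; have /set0Pn [x xi] := hmin' P PQ.
  case xP: (x \in P).
    have : x \in \bigcap_(P' in Q) P'.
      apply/bigcapP => P' P'Q; case: (eqVneq P' P) => [-> //| ne].
      by move/bigcapP: xi; apply; rewrite !inE ne P'Q.
    by rewrite Qcap inE.
  by have := hnone x; rewrite !inE xP xi.
pose E := e @: Q.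
have cardE : #|E| = #|Q|.
  apply: card_in_imset => P1 P2 P1Q P2Q he; apply/eqP/negP => /negP ne.
  have [h1 _] := espec P1 P1Q; have [_ h2] := espec P2 P2Q.
  by move: h1; rewrite he h2.
have hPE : forall P, P \in Q -> #|P :\: E| + (#|Q| - 1) <= t.
  move=> P PQ; have /and3P [_ Pt' _] := hPt P PQ.
  have sub : E :\ e P \subset P :&: E.
    apply/subsetP => x; rewrite !inE => /andP [xne /imsetP [P' P'Q xe]]; subst x.
    rewrite (imset_f e P'Q) andbT; apply: (proj2 (espec P' P'Q)) => //.
    by apply/negP => /eqP h; move: xne; rewrite h eqxx.
  have := subset_leq_card sub; have h1 := cardsD1 (e P) E.
  rewrite (imset_f e PQ) cardE add1n in h1.
  have := cardsID E P => hID hsub; rewrite h1 subSS subn0; apply: leq_trans Pt'; by rewrite -hID addnC leq_add2r.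
pose C := \bigcup_(P in Q) P.
have [P0 P0Q] := set0Pn _ Q0.
have rt : #|Q| - 1 <= t by have := hPE P0 P0Q; lia.
have Cle : #|C| <= #|Q| + #|Q| * (t - (#|Q| - 1)).
  have sub : C \subset E :|: \bigcup_(P in Q) (P :\: E).
    apply/subsetP => x /bigcupP [P PQ xP]; rewrite inE.
    case xE: (x \in E) => //=; apply/bigcupP; exists P => //; by rewrite inE xE.
  apply: (leq_trans (subset_leq_card sub)); rewrite cardsU cardE.
  apply: (leq_trans (leq_subr _ _)); rewrite leq_add2l.
  apply: (leq_trans (card_bigcup_le _ _)); rewrite -sum_nat_const.
  by apply: leq_sum => P PQ; have := hPE P PQ; lia.
have Cu : #|C| <= (t + 2) ^ 2 %/ 4.
  rewrite leq_divRL //; apply: (leq_trans (leq_mul Cle (leqnn 4))).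
  have Q1 : 0 < #|Q| by apply/card_gt0P; exists P0.
  move: rt Q1; set r := #|Q| => rt Q1.
  have [k hk] : exists k, t = k + r - 1 by exists (t - (r - 1)); lia.
  have hk2 : t - (r - 1) = k by lia.
  rewrite hk2; have -> : t + 2 = k.+1 + r by lia.
  have e1 : (r + r * k) * 4 = 4 * (k.+1 * r) by rewrite mulnC mulSn mulnC.
  rewrite e1; by case: (nat_AGM2 k.+1 r).
have CB : C \subset B.
  apply/subsetP => b /bigcupP [P PQ bP].
  by have /and3P [/subsetP PB _ _] := hPt P PQ; apply: PB.
have cov : forall x, x \in T -> 1 < #|[set b in C | x \in b]|.
  move=> x xT; have /and3P [_ _ /subsetP TP0] := hPt P0 P0Q.
  have /bigcupP [b0 b0P0 xb0] := TP0 x xT.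
  have b0C : b0 \in C by apply/bigcupP; exists P0.
  rewrite ltnNge; apply/negP => /card_le1_eqP hle.
  have : b0 \in \bigcap_(P in Q) P.
    apply/bigcapP => P PQ; have /and3P [_ _ /subsetP TP] := hPt P PQ.
    have /bigcupP [b bP xb] := TP x xT.
    have bC : b \in C by apply/bigcupP; exists P.
    have := hle b b0; rewrite !inE bC xb b0C xb0 => /(_ isT isT) ->.
    done.
  by rewrite Qcap inE.
have [x xT] : exists x, x \in T.
  by apply/card_gt0P; rewrite hT.
have C2 : 2 <= #|C|.
  apply: (leq_trans (cov x xT)); apply: subset_leq_card.
  by apply/subsetP => b; rewrite inE => /andP [].
have hov := overlap (fun b bC => hB b (subsetP CB b bC)) hT cov.
have := hnb C CB; rewrite C2 Cu => /(_ isT).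
rewrite mulnBl mul1n; lia.
Qed.

Lemma prod_family (aT : finType) (rT : finType) (G : aT -> {set rT}) :
  #|(family G : simpl_pred {ffun aT -> rT})| = \prod_(i : aT) #|G i|.
Proof. by rewrite card_family /image_mem foldrE big_map big_enum. Qed.

Lemma sum_pred_card (T : finType) (A : {pred T}) : \sum_x (x \in A) = #|A|.
Proof.
rewrite -sum1_card [RHS]big_mkcond /=; apply: eq_bigr => x _; by case: (x \in A).
Qed.

Lemma leq_expn_base m n e : m <= n -> m ^ e <= n ^ e.
Proof. by case: e => [//|e] h; rewrite leq_exp2r. Qed.

Lemma card_small (T : finType) k :
  #|[set S : {set T} | #|S| <= k]| <= (#|T|.+1) ^ k.
Proof.
elim: k => [|k IH].
  rewrite expn0; apply/card_le1_eqP => S1 S2; rewrite !inE !leqn0.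
  by move=> /eqP/cards0_eq -> /eqP/cards0_eq ->.
pose f (p : {set T} * option T) :=
  p.1 :|: (if p.2 is Some x then [set x] else set0).
have sub : [set S : {set T} | #|S| <= k.+1] \subset
           f @: setX [set S : {set T} | #|S| <= k] [set: option T].
  apply/subsetP => S; rewrite inE => hS.
  case: (set_0Vmem S) => [-> | [x xS]].
    apply/imsetP; exists (set0, None); last by rewrite /f /= setU0.
    by rewrite !inE cards0.
  apply/imsetP; exists (S :\ x, Some x); last by rewrite /f /= setUC setD1K.
  rewrite !inE andbT; have := cardsD1 x S; rewrite xS add1n => h.
  by rewrite h ltnS in hS.
apply: (leq_trans (subset_leq_card sub)); apply: (leq_trans (leq_imset_card _ _)).
by rewrite cardsX cardsT card_option expnSr leq_mul2r IH orbT.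
Qed.

Lemma ffact_lb n k : (n - k) ^ k <= n ^_ k.
Proof.
elim: k => [|k IH]; first by rewrite ffactn0.
rewrite ffactnSr expnSr; apply: leq_mul; last by apply: leq_sub2l.
apply: leq_trans IH; apply: leq_expn_base; by apply: leq_sub2l.
Qed.

Definition Wset (w v : nat) : {set {set 'I_v}} := [set A : {set 'I_v} | #|A| == w].

Lemma card_Wset w v : #|Wset w v| = 'C(v, w).
Proof. by rewrite /Wset card_draws card_ord. Qed.

Lemma bin_lb v w : 2 * w <= v -> v ^ w <= 'C(v, w) * (2 ^ w * w`!).
Proof.
move=> h; rewrite mulnCA bin_ffact.
apply: (leq_trans _ (leq_mul (leqnn (2 ^ w)) (ffact_lb v w))).
rewrite -expnMn; apply: leq_expn_base; lia.
Qed.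

Definition Bad (u w v m : nat) (F : {ffun 'I_m -> {set 'I_v}}) : {set {set 'I_m}} :=
  [set S : {set 'I_m} | (2 <= #|S| <= u) &&
                         (#|\bigcup_(i in S) F i| <= (#|S| - 1) * w)].

Lemma construct u w v m (i0 : 'I_m) (F : {ffun 'I_m -> {set 'I_v}}) :
  2 <= u -> F \in family (fun _ => Wset w v) ->
  exists B : {set {set 'I_v}}, (forall b, b \in B -> #|b| = w) /\
     nobad u w B /\ m <= #|B| + #|Bad u w F|.
Proof.
move=> u2 /familyP FW.
have Fw : forall i, #|F i| = w by move=> i; have := FW i; rewrite inE => /eqP.
pose h (S : {set 'I_m}) := odflt i0 [pick i in S].
pose D := h @: Bad u w F.
have hh : forall S, S \in Bad u w F -> h S \in S /\ h S \in D.
  move=> S SB; split; last by apply: imset_f.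
  rewrite /h; case: pickP => [i //| none].
  move: SB; rewrite inE => /andP [/andP [h2 _] _].
  have /card_gt0P [i iS] : 0 < #|S| by lia.
  by have := none i; rewrite iS.
have inj : {in ~: D &, injective F}.
  move=> i j iD jD Fij; apply/eqP/negP => /negP ne.
  have SB : [set i; j] \in Bad u w F.
    rewrite inE cards2 ne /= u2 /=.
    apply: (leq_trans (subset_leq_card (_ : _ \subset F i))); last by rewrite Fw mul1n.
    apply/subsetP => x /bigcupP [k]; rewrite !inE => /orP [] /eqP -> //.
    by rewrite Fij.
  have [hS hD] := hh _ SB.
  move: hS; rewrite !inE => /orP [] /eqP hS; rewrite hS in hD.
    by move: iD; rewrite inE hD.
  by move: jD; rewrite inE hD.
exists (F @: ~: D); split; [|split].
- by move=> b /imsetP [i _ ->].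
- move=> C CB /andP [C2 Cu]; rewrite ltnNge; apply/negP => hle.
  pose g b := odflt i0 [pick i in ~: D | F i == b].
  have gspec : forall b, b \in C -> g b \in ~: D /\ F (g b) = b.
    move=> b bC; have /imsetP [i iD ->] := subsetP CB b bC.
    rewrite /g; case: pickP => [j /andP [jD /eqP //] | none].
    by have := none i; rewrite iD eqxx.
  pose S := g @: C.
  have ginj : {in C &, injective g}.
    move=> b1 b2 b1C b2C e.
    by rewrite -(proj2 (gspec b1 b1C)) -(proj2 (gspec b2 b2C)) e.
  have cS : #|S| = #|C| by apply: card_in_imset.
  have uS : \bigcup_(i in S) F i = \bigcup_(b in C) b.
    rewrite big_imset //=; apply: eq_bigr => b bC; exact: proj2 (gspec b bC).
  have SB : S \in Bad u w F by rewrite inE cS C2 Cu uS hle.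
  have [hS hD] := hh S SB.
  move: hS => /imsetP [b bC e]; have := proj1 (gspec b bC).
  by rewrite -e inE hD.
- have := cardsC D; rewrite card_ord => hc.
  rewrite card_in_imset //.
  have := leq_imset_card h (Bad u w F); move=> hi; apply: (leq_trans (_ : m <= #|D| + #|~: D|)); first by rewrite hc. by rewrite addnC leq_add2l.
Qed.

Definition K1 u w := 2 ^ (u * w) * 2 ^ (u * w * u) * (2 ^ w * w`!) ^ u.

Lemma perS u w v m (S : {set 'I_m}) : 0 < v -> 2 * w <= v -> 1 <= #|S| <= u ->
  \sum_(F in family (fun _ : 'I_m => Wset w v)) (S \in Bad u w F) * v ^ w
    <= K1 u w * #|Wset w v| ^ m.
Proof.
move=> v0 hv /andP [s1 su].
set N := #|Wset w v|; set s := #|S|; set n := (s - 1) * w.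
pose G (U : {set 'I_v}) (i : 'I_m) :=
  if i \in S then Wset w v :&: powerset U else Wset w v.
pose Sm := [set U : {set 'I_v} | #|U| <= n].
set X := \sum_(F in family (fun _ : 'I_m => Wset w v)) (S \in Bad u w F).
have step1 : X <= \sum_(U in Sm) #|(family (G U) : simpl_pred _)|.
  apply: (leq_trans (_ : _ <= \sum_(F in family (fun _ : 'I_m => Wset w v))
                      \sum_(U in Sm) (F \in family (G U)))).
    apply: leq_sum => F /familyP FW; case: (boolP (S \in Bad u w F)) => // SB.
    move: SB; rewrite inE => /andP [_ hU].
    rewrite (bigD1 (\bigcup_(i in S) F i)) /=; last by rewrite inE.
    suff -> : F \in family (G (\bigcup_(i in S) F i)) by [].
    apply/familyP => i; rewrite /G; case: ifP => iS; last exact: FW i.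
    by rewrite inE FW powersetE (bigcup_sup _ iS).
  rewrite exchange_big /=; apply: leq_sum => U _.
  rewrite -sum_pred_card [X in X <= _]big_mkcond /=; apply: leq_sum => F _.
  by case: (F \in _).
set a := 2 ^ n.
have step2 : forall U, U \in Sm ->
    #|(family (G U) : simpl_pred _)| * N ^ s <= a ^ s * N ^ m.
  move=> U; rewrite inE => hU; rewrite prod_family.
  have h1 : \prod_i #|G U i| <= \prod_i (if i \in S then a else N).
    apply: leq_prod => i _; rewrite /G; case: ifP => _ //.
    apply: (leq_trans (subset_leq_card (subsetIr _ _))).
    by rewrite card_powerset leq_exp2l.
  have e : \prod_(i : 'I_m) (if i \in S then a else N) = a ^ s * N ^ #|~: S|.
    rewrite (bigID (fun i => i \in S)) /=; congr (_ * _).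
      by rewrite -prod_nat_const; apply: eq_bigr => i ->.
    rewrite -prod_nat_const; apply: eq_big => [i|i]; first by rewrite inE.
    by move=> /negbTE ->.
  have hc := cardsC S; rewrite card_ord in hc.
  apply: (leq_trans (leq_mul h1 (leqnn _))); rewrite e -mulnA -expnD.
  by rewrite addnC -/s hc.
have step3 : X * N ^ s <= (v.+1) ^ n * (a ^ s * N ^ m).
  apply: (leq_trans (leq_mul step1 (leqnn _))); rewrite big_distrl /=.
  apply: (@leq_trans (\sum_(U in Sm) a ^ s * N ^ m)); first by apply: leq_sum => U hU; exact: step2.
  rewrite sum_nat_const; apply: leq_mul => //.
  by have := card_small 'I_v n; rewrite card_ord.
set K0 := 2 ^ w * w`!.
have b1 : v ^ w * v ^ n <= N ^ s * K0 ^ s.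
  rewrite -expnD -expnMn (_ : w + n = w * s); last by rewrite /n; nia.
  by rewrite expnM; apply: leq_expn_base; rewrite /N card_Wset; apply: bin_lb.
have b2 : (v.+1) ^ n <= 2 ^ n * v ^ n.
  by rewrite -expnMn; apply: leq_expn_base; lia.
have b3 : X * v ^ w * v ^ n <= (2 ^ n * a ^ s * K0 ^ s * N ^ m) * v ^ n.
  apply: (leq_trans (_ : _ <= X * N ^ s * K0 ^ s)).
    by rewrite -mulnA -[X * N ^ s * _]mulnA leq_mul2l b1 orbT.
  apply: (leq_trans (leq_mul step3 (leqnn _))).
  apply: (leq_trans (leq_mul (leq_mul b2 (leqnn _)) (leqnn _))).
  apply: eq_leq; ring.
rewrite leq_pmul2r ?expn_gt0 ?v0 // in b3.
rewrite -big_distrl /= -/X; apply: (leq_trans b3); rewrite leq_mul2r /K1.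
apply/orP; right; apply: leq_mul; first apply: leq_mul.
- by apply: leq_pexp2l => //; rewrite /n leq_mul2r; apply/orP; right; lia.
- rewrite /a -expnM; apply: leq_pexp2l => //; apply: leq_mul => //.
  by rewrite /n leq_mul2r; apply/orP; right; lia.
- apply: leq_pexp2l => //; by rewrite /K0 muln_gt0 expn_gt0 fact_gt0.
Qed.

Lemma exists_good u w v m : 0 < w -> 2 * w <= v -> 1 <= u ->
  2 * K1 u w * m.+1 ^ u < m.+1 * v ^ w ->
  exists2 F : {ffun 'I_m -> {set 'I_v}},
    F \in family (fun _ : 'I_m => Wset w v) & 2 * #|Bad u w F| <= m.
Proof.
move=> w0 hv u1 hM.
have v0 : 0 < v by lia.
set N := #|Wset w v|.
have N0 : 0 < N by rewrite /N card_Wset bin_gt0; lia.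
have cardOm : #|(family (fun _ : 'I_m => Wset w v) : simpl_pred _)| = N ^ m.
  by rewrite prod_family big_const_ord iter_muln_1.
have total : \sum_(F in family (fun _ : 'I_m => Wset w v)) #|Bad u w F| * v ^ w
              <= m.+1 ^ u * (K1 u w * N ^ m).
  have -> : \sum_(F in family (fun _ : 'I_m => Wset w v)) #|Bad u w F| * v ^ w =
      \sum_(F in family (fun _ : 'I_m => Wset w v)) \sum_S (S \in Bad u w F) * v ^ w.
    by apply: eq_bigr => F _; rewrite -sum_card big_distrl.
  rewrite exchange_big /=.
  apply: (leq_trans (_ : _ <= \sum_(S in [set S : {set 'I_m} | #|S| <= u])
                                  K1 u w * N ^ m)).
    rewrite [X in _ <= X]big_mkcond; apply: leq_sum => S _; rewrite inE.
    case: ifP => hS.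
      case: (posnP #|S|) => s0.
        by rewrite big1 // => F _; rewrite inE s0.
      by apply: perS => //; rewrite s0 hS.
    rewrite big1 // => F _; rewrite inE.
    by have -> : (2 <= #|S| <= u) = false by apply/negP => /andP [_ h]; rewrite h in hS.
  rewrite sum_nat_const; apply: leq_mul => //.
  by have := card_small 'I_m u; rewrite card_ord.
case: (pickP (fun F => (F \in family (fun _ : 'I_m => Wset w v)) &&
                       (2 * #|Bad u w F| <= m))) => [F /andP [FO hF] | none].
  by exists F.
exfalso.
have : \sum_(F in family (fun _ : 'I_m => Wset w v)) m.+1 * v ^ w <=
       2 * (m.+1 ^ u * (K1 u w * N ^ m)).
  apply: (leq_trans _ (leq_mul (leqnn 2) total)); rewrite big_distrr /=.
  apply: leq_sum => F FO; rewrite mulnA leq_mul2r; apply/orP; right.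
  by have := none F; rewrite FO /= => /negbT; rewrite -ltnNge.
rewrite sum_nat_const cardOm => h.
have : N ^ m * (m.+1 * v ^ w) <= N ^ m * (2 * K1 u w * m.+1 ^ u).
  apply: (leq_trans h); apply: eq_leq; ring.
rewrite leq_pmul2l ?expn_gt0 ?N0 //; by rewrite leqNgt hM.
Qed.

Lemma INR_expn a k : INR (a ^ k) = pow (INR a) k.
Proof.
elim: k => [|k IH]; first by rewrite expn0.
by rewrite expnS -multE mult_INR IH.
Qed.

Lemma exm (P : pred nat) (X : nat) : P 0 -> (forall j, P j -> j <= X) ->
  exists m, P m /\ ~~ P m.+1.
Proof.
move=> h0 hb; have ex : exists i, P i by exists 0.
case: (ex_maxnP ex hb) => i Pi hmax; exists i; split => //.
by apply/negP => h; have := hmax _ h; rewrite ltnn.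
Qed.

Theorem theorem1 (w t : nat) (hw : 0 < w) (ht : 2 <= t) :
  let u := ((t + 2) ^ 2) %/ 4 in
  exists c : R, Rlt 0 c /\
    exists N : nat, forall v : nat, N <= v ->
      exists B : {set {set 'I_v}}, IPPS t w B /\
        Rle (Rmult c (Rpower (INR v) (Rdiv (INR w) (INR (u - 1))))) (INR #|B|).
Proof.
move=> u.
have u4 : 4 <= u by rewrite /u leq_divRL //; apply: (@leq_trans 16) => //;
  rewrite (_ : 16 = 4 ^ 2) // leq_exp2r //; lia.
set M := 2 * K1 u w + 1.
have M1 : 1 <= M by rewrite /M; lia.
exists (Rinv (Rmult (INR 6) (INR M))); split.
  apply: Rinv_0_lt_compat; apply: Rmult_lt_0_compat; apply/lt_0_INR/ltP; lia.
exists (M * 2 ^ (u - 1) + 2 * w) => v hv.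
have v1 : 1 <= v by lia.
have hM2 : M <= M * 2 ^ (u - 1) by rewrite leq_pmulr // expn_gt0.
have vw : v <= v ^ w by rewrite -{1}(expn1 v) leq_pexp2l.
pose P := fun j => M * j.+1 ^ (u - 1) <= v ^ w.
have [m [Pm nPm]] : exists m, P m /\ ~~ P m.+1.
  apply: (exm (X := v ^ w)).
    by rewrite /P exp1n muln1; lia.
  move=> j; rewrite /P => hj; apply: leq_trans hj.
  apply: (@leq_trans (j.+1 ^ (u - 1))).
    apply: ltnW; apply: (@leq_trans (j.+1 ^ 1)); first by rewrite expn1.
    apply: leq_pexp2l => //; lia.
  by rewrite leq_pmull.
have m1 : 1 <= m.
  case: m Pm nPm => // _; rewrite /P.
  by have -> : M * 2 ^ (u - 1) <= v ^ w by lia.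
have u2 : 2 <= u by lia.
have hgood : 2 * K1 u w * m.+1 ^ u < m.+1 * v ^ w.
  have e : m.+1 ^ u = m.+1 * m.+1 ^ (u - 1).
    by rewrite -expnS; congr (_ ^ _); lia.
  rewrite e; move: Pm; rewrite /P /M => Pm.
  have h0 : 0 < m.+1 * m.+1 ^ (u - 1) by rewrite muln_gt0 expn_gt0.
  apply: (@leq_trans (m.+1 * ((2 * K1 u w + 1) * m.+1 ^ (u - 1)))); last first.
    by rewrite leq_mul2l Pm orbT.
  have -> : m.+1 * ((2 * K1 u w + 1) * m.+1 ^ (u - 1)) =
     2 * K1 u w * (m.+1 * m.+1 ^ (u - 1)) + m.+1 * m.+1 ^ (u - 1) by ring.
  by rewrite -addn1 leq_add2l.
have hv2 : 2 * w <= v by lia.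
have u1 : 1 <= u by lia.
have [F FO hF] := exists_good hw hv2 u1 hgood.
have i0 : 'I_m by exists 0.
have [B [hB [hnb hcard]]] := construct i0 u2 FO.
exists B; split; first exact: ipps_of_nobad.
set y := Rpower (INR v) (Rdiv (INR w) (INR (u - 1))).
have v0R : Rlt 0 (INR v) by apply/lt_0_INR/ltP; lia.
have ypos : Rlt 0 y by rewrite /y /Rpower; apply: exp_pos.
have yk : pow y (u - 1) = INR (v ^ w).
  rewrite -Rpower_pow // /y Rpower_mult.
  have -> : Rmult (Rdiv (INR w) (INR (u - 1))) (INR (u - 1)) = INR w.
    rewrite /Rdiv Rmult_assoc Rinv_l ?Rmult_1_r //; apply: not_0_INR; lia.
  by rewrite Rpower_pow // INR_expn.
have yz : Rle y (INR (M * m.+2)).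
  case: (Rle_or_lt y (INR (M * m.+2))) => // hlt; exfalso.
  have h1 : Rle (pow (INR (M * m.+2)) (u - 1)) (pow y (u - 1)).
    apply: pow_incr; split; [apply: pos_INR | by apply: Rlt_le].
  rewrite yk -INR_expn in h1; have h2 := INR_le _ _ h1.
  move/leP: h2 => h2.
  have h3 : M * m.+2 ^ (u - 1) <= (M * m.+2) ^ (u - 1).
    rewrite expnMn leq_mul2r; apply/orP; right.
    by rewrite -{1}(expn1 M); apply: leq_pexp2l => //; lia.
  by move: nPm; rewrite /P -ltnNge => h4; lia.
have hB6 : M * m.+2 <= 6 * M * #|B|.
  rewrite (mulnC 6 M) -mulnA leq_mul2l; apply/orP; right; lia.
apply: (Rle_trans _ (Rmult (Rinv (Rmult (INR 6) (INR M))) (INR (6 * M * #|B|)))).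
  apply: Rmult_le_compat_l.
    by apply: Rlt_le; apply: Rinv_0_lt_compat; apply: Rmult_lt_0_compat;
       apply/lt_0_INR/ltP; lia.
  by apply: (Rle_trans _ _ _ yz); apply: le_INR; apply/leP.
rewrite -!multE !mult_INR; right.
rewrite -Rmult_assoc Rinv_l ?Rmult_1_l //.
apply: Rmult_integral_contrapositive_currified; apply: not_0_INR; lia.
Qed.
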